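(* Let $A$ be a commutative unital $\mathbb{K}$-algebra equipped with an involution $\dagger:A\to A$ (a linear map with $\dagger\circ\dagger=\mathrm{id}$ and $[a;b]^\dagger=[b^\dagger;a^\dagger]$). Let $q\in\{\theta,\mathrm r,\ell\}$ ($\theta\in\mathbb{K}$) and extend $\dagger$ to $T^+(A)$ by $(a_1\otimes\cdots\otimes a_n)^\dagger:=a_1^\dagger\otimes\cdots\otimes a_n^\dagger$. Then $(T^+(A),\bar\bullet^q,P_A,\dagger)$ is an involutive commutative $\mathbf R_q$-algebra, and together with $i_A:a\mapsto a\otimes1_{\mathbb{K}}$ it is the free involutive commutative $\mathbf R_q$-algebra over $(A,\dagger)$: for every unital commutative $\mathbf R_q$-algebra $(X,P)$ with involution $\dagger'$ commuting with $P$, and every unital algebra morphism $\phi:A\to X$ with $\phi(a^\dagger)=\phi(a)^{\dagger'}$, there is a unique $\mathbf R_q$-algebra morphism $\tilde\phi:T^+(A)\to X$ with $\tilde\phi\circ i_A=\phi$, and it satisfies $\tilde\phi(U^\dagger)=\tilde\phi(U)^{\dagger'}$ for all $U$.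
   Context: $\mathbb{K}$ is a field of characteristic $0$; $A$ has product $[a;b]$ and unit $1_A$. $T(A)=\bigoplus_{n\ge0}A^{\otimes n}$, $A^{\otimes0}=\mathbb{K}1_{\mathbb{K}}$, $a\otimes1_{\mathbb{K}}$ identified with $a$. For $q\in\{\theta,\mathrm r,\ell\}$ the product $\bullet^q$ on $T(A)$ is bilinear with $k1_{\mathbb{K}}\bullet^qU=kU=U\bullet^qk1_{\mathbb{K}}$ and for $a,b\in A$, $U,V\in T(A)$: $(a\otimes U)\bullet^q(b\otimes V)=a\otimes(U\bullet^q(b\otimes V))+b\otimes((a\otimes U)\bullet^qV)+M_q$, where $M_\theta=\theta[a;b]\otimes(U\bullet^\theta V)$ (quasi-shuffle of weight $\theta$), $M_{\mathrm r}=-1_A\otimes[a;b]\otimes(U\bullet^{\mathrm r}V)$ (right-shift shuffle), $M_\ell=-[a;b]\otimes1_A\otimes(U\bullet^\ell V)$ (left-shift shuffle). $T^+(A)=A\otimes T(A)$ with product $(a\otimes U)\bar\bullet^q(b\otimes V)=[a;b]\otimes(U\bullet^qV)$, unit $1_A\otimes1_{\mathbb{K}}$, and $P_A(a_1\otimes\cdots\otimes a_n)=1_A\otimes a_1\otimes\cdots\otimes a_n$. An $\mathbf R_\theta$-algebra is a Rota--Baxter algebra of scalar weight $\theta$: $(B,P)$ with $P(x)P(y)=P(P(x)y+xP(y))+\theta P(xy)$; an $\mathbf R_{\mathrm r}$-algebra is a Nijenhuis algebra: $P(x)P(y)=P(P(x)y+xP(y))-P^2(xy)$; an $\mathbf R_\ell$-algebra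 is a $TD$-algebra: $P(x)P(y)=P(P(x)y+xP(y))-P(xP(1_B)y)$. Morphisms of $\mathbf R_q$-algebras are unital algebra homomorphisms $f$ with $fP_1=P_2f$. An involutive commutative $\mathbf R_q$-algebra is a unital commutative $\mathbf R_q$-algebra $(B,P)$ with an involution $\dagger$ (linear, $\dagger^2=\mathrm{id}$, $(xy)^\dagger=y^\dagger x^\dagger$) satisfying $P(x^\dagger)=P(x)^\dagger$. *)

(* Defs.v *)
(* Tensor algebra T(A) and T^+(A) are built as quotients
   (presented as setoids) of free K-modules {malg K[_]} on words. *)
From HB Require Import structures.
From mathcomp Require Import all_boot all_order all_algebra.
From mathcomp Require Import finmap.
From mathcomp Require Import monalg.

Set Implicit Arguments.
Unset Strict Implicit.
Unset Printing Implicit Defensive.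

Import GRing.Theory.
Local Open Scope ring_scope.

Inductive wtype (K : Type) : Type :=
  | Wtheta of K   (* Rota--Baxter of weight theta / quasi-shuffle *)
  | Wright        (* Nijenhuis / right-shift shuffle *)
  | Wleft.        (* TD / left-shift shuffle *)
Arguments Wright {K}.
Arguments Wleft {K}.

Section Tensor.
Variables (K : fieldType) (A : comAlgType K).

Definition lin_ext (T : choiceType) (V : lmodType K) (f : T -> V)
  (x : {malg K[T]}) : V :=
  \sum_(s <- msupp x) x@_s *: f s.

Definition bilin_ext (T1 T2 : choiceType) (V : lmodType K)
  (f : T1 -> T2 -> V) (x : {malg K[T1]}) (y : {malg K[T2]}) : V :=
  \sum_(s <- msupp x) \sum_(t <- msupp y) (x@_s * y@_t) *: f s t.

(* Free K-module on words; the word [:: a1; ...; an] stands for the pure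
   tensor a1 (x) ... (x) an, and [::] for 1_K. *)
Definition FT := {malg K[seq A]}.
Definition wvec (w : seq A) : FT := << w >>.

Definition consT (a : A) : FT -> FT := lin_ext (fun w => wvec (a :: w)).

Definition Mq (q : wtype K) (a b : A) (X : FT) : FT :=
  match q with
  | Wtheta th => th *: consT (a * b) X
  | Wright => - consT 1 (consT (a * b) X)
  | Wleft => - consT (a * b) (consT 1 X)
  end.

Fixpoint wmul (q : wtype K) (s t : seq A) {struct s} : FT :=
  match s with
  | [::] => wvec t
  | a :: u =>
      let fix wmul_t (t : seq A) : FT :=
        match t with
        | [::] => wvec (a :: u)
        | b :: v => consT a (wmul q u (b :: v)) + consT b (wmul_t v)
                    + Mq q a b (wmul q u v)
        end in
      wmul_t t
  end.

Definition tmul (q : wtype K) : FT -> FT -> FT := bilin_ext (wmul q).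

(* the subspace of multilinearity relations; T(A) = FT / tnull *)
Inductive tnull : FT -> Prop :=
  | tnull_gen (u v : seq A) (a b : A) (k : K) :
      tnull (wvec (u ++ (k *: a + b) :: v) - k *: wvec (u ++ a :: v)
             - wvec (u ++ b :: v))
  | tnull_add x y : tnull x -> tnull y -> tnull (x + y)
  | tnull_scale (k : K) x : tnull x -> tnull (k *: x).

Definition teqv (x y : FT) : Prop := tnull (x - y).

(* T^+(A) = A (x) T(A): free module on pairs (a, w) standing for a (x) w *)
Definition FP := {malg K[(A * seq A)%type]}.
Definition pvec (p : A * seq A) : FP := << p >>.

(* identification of A (x) T(A) with the positive-length part of T(A) *)
Definition flat : FP -> FT := lin_ext (fun p => wvec (p.1 :: p.2)).

Definition peqv (x y : FP) : Prop := teqv (flat x) (flat y).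

Definition pconsT (a : A) : FT -> FP := lin_ext (fun w => pvec (a, w)).

Definition pmul (q : wtype K) : FP -> FP -> FP :=
  bilin_ext (fun p p' => pconsT (p.1 * p'.1) (wmul q p.2 p'.2)).

Definition pone : FP := pvec (1, [::]).

Definition PA : FP -> FP := lin_ext (fun p => pvec (1, p.1 :: p.2)).

Definition pdag (dag : A -> A) : FP -> FP :=
  lin_ext (fun p => pvec (dag p.1, map dag p.2)).

Definition iA (a : A) : FP := pvec (a, [::]).

End Tensor.

Definition Rq_identity (K : fieldType) (V : lmodType K) (q : wtype K)
  (eqv : V -> V -> Prop) (mul : V -> V -> V) (one : V) (P : V -> V) :=
  forall x y : V,
    eqv (mul (P x) (P y))
      match q with
      | Wtheta th => P (mul (P x) y + mul x (P y)) + th *: P (mul x y)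
      | Wright => P (mul (P x) y + mul x (P y)) - P (P (mul x y))
      | Wleft => P (mul (P x) y + mul x (P y)) - P (mul (mul x (P one)) y)
      end.

(* An involutive commutative (unital) R_q-algebra, presented as a setoid:
   the carrier is V modulo the equivalence eqv (for an honest algebra take
   eqv := eq). *)
Record inv_comm_Rq_alg (K : fieldType) (V : lmodType K) (q : wtype K)
  (eqv : V -> V -> Prop) (mul : V -> V -> V) (one : V) (P dag : V -> V)
  : Prop := {
  eqv_refl : forall x, eqv x x;
  eqv_sym : forall x y, eqv x y -> eqv y x;
  eqv_trans : forall x y z, eqv x y -> eqv y z -> eqv x z;
  eqv_add : forall x x' y y', eqv x x' -> eqv y y' -> eqv (x + y) (x' + y');
  eqv_scale : forall (k : K) x x', eqv x x' -> eqv (k *: x) (k *: x');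
  eqv_mul : forall x x' y y', eqv x x' -> eqv y y' -> eqv (mul x y) (mul x' y');
  eqv_P : forall x x', eqv x x' -> eqv (P x) (P x');
  eqv_dag : forall x x', eqv x x' -> eqv (dag x) (dag x');
  mul_linear : forall (k : K) x y z,
      eqv (mul (k *: x + y) z) (k *: mul x z + mul y z);
  mul_assoc : forall x y z, eqv (mul x (mul y z)) (mul (mul x y) z);
  mul_comm : forall x y, eqv (mul x y) (mul y x);
  mul_one : forall x, eqv (mul one x) x;
  P_linear : forall (k : K) x y, eqv (P (k *: x + y)) (k *: P x + P y);
  P_Rq : Rq_identity q eqv mul one P;
  dag_linear : forall (k : K) x y, eqv (dag (k *: x + y)) (k *: dag x + dag y);
  dag_invol : forall x, eqv (dag (dag x)) x;
  dag_antimul : forall x y, eqv (dag (mul x y)) (mul (dag y) (dag x));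
  dag_P : forall x, eqv (P (dag x)) (dag (P x))
}.

Record Rq_morph (K : fieldType) (V : lmodType K) (X : comAlgType K)
  (eqv : V -> V -> Prop) (mulV : V -> V -> V) (oneV : V) (PV : V -> V)
  (PX : X -> X) (f : V -> X) : Prop := {
  morph_wd : forall x y, eqv x y -> f x = f y;
  morph_linear : forall (k : K) x y, f (k *: x + y) = k *: f x + f y;
  morph_mul : forall x y, f (mulV x y) = f x * f y;
  morph_one : f oneV = 1;
  morph_P : forall x, f (PV x) = PX (f x)
}.

(* Main.v *)
Require Import Defs.
From HB Require Import structures.
From mathcomp Require Import all_boot all_order all_algebra.
From mathcomp Require Import finmap monalg.
From mathcomp Require Import zify ring.
Import GRing.Theory.
Local Open Scope ring_scope.

Section Islin.
Variable (K : fieldType).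
Definition islin {U W : lmodType K} (L : U -> W) :=
  forall (k : K) (x y : U), L (k *: x + y) = k *: L x + L y.

Variables (U W : lmodType K) (L : U -> W) (HL : islin L).
Lemma islin0 : L 0 = 0.
Proof.
have h := HL 1 0 0; rewrite !scale1r addr0 in h.
by apply: (addrI (L 0)); rewrite addr0 -h.
Qed.
Lemma islinD x y : L (x + y) = L x + L y.
Proof. by have := HL 1 x y; rewrite !scale1r. Qed.
Lemma islinZ k x : L (k *: x) = k *: L x.
Proof. by rewrite -[k *: x]addr0 HL islin0 addr0. Qed.
Lemma islinN x : L (- x) = - L x.
Proof. by rewrite -scaleN1r islinZ scaleN1r. Qed.
Lemma islinB x y : L (x - y) = L x - L y.
Proof. by rewrite islinD islinN. Qed.
Lemma islin_sum (I : Type) (r : seq I) (F : I -> U) :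
  L (\sum_(i <- r) F i) = \sum_(i <- r) L (F i).
Proof.
elim: r => [|i r IH]; first by rewrite !big_nil islin0.
by rewrite !big_cons islinD IH.
Qed.
End Islin.
Arguments islin {K U W}.
Arguments islin0 {K U W L}.
Arguments islinD {K U W L}.
Arguments islinZ {K U W L}.
Arguments islinN {K U W L}.
Arguments islinB {K U W L}.
Arguments islin_sum {K U W L}.

Lemma islin_comp (K : fieldType) (U V W : lmodType K) (f : V -> W) (g : U -> V) :
  islin f -> islin g -> islin (fun x => f (g x)).
Proof. by move=> hf hg k x y; rewrite hg hf. Qed.
Arguments islin_comp {K U V W}.

Section Lin.
Context {K : fieldType} {T : choiceType} {V : lmodType K}.

Lemma lin_extEw (f : T -> V) (x : {malg K[T]}) (d : {fset T}) :
  (msupp x `<=` d)%fset -> lin_ext f x = \sum_(s <- d) x@_s *: f s.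
Proof.
move=> le; rewrite /lin_ext (big_fset_incl _ le) //= => s _ /mcoeff_outdom ->.
by rewrite scale0r.
Qed.

Lemma lin_ext_lin (f : T -> V) : islin (lin_ext f).
Proof.
move=> k x y.
rewrite (@lin_extEw f (k *: x + y) ((msupp x `|` msupp y)%fset)); last first.
  apply: fsubset_trans (msuppD_le _ _) _.
  by rewrite fsetSU // msuppZ_le.
rewrite (@lin_extEw f x ((msupp x `|` msupp y)%fset)) ?fsubsetUl //.
rewrite (@lin_extEw f y ((msupp x `|` msupp y)%fset)) ?fsubsetUr //.
rewrite scaler_sumr -big_split /=; apply: eq_bigr => s _.
by rewrite mcoeffD mcoeffZ scalerDl scalerA.
Qed.

Lemma lin_extUc (f : T -> V) c s : lin_ext f << c *g s >> = c *: f s.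
Proof. by rewrite (@lin_extEw f _ _ msuppU_le) big_seq_fset1 mcoeffUU. Qed.

Lemma lin_extU (f : T -> V) s : lin_ext f << s >> = f s.
Proof. by rewrite lin_extUc scale1r. Qed.

Lemma malgUZ (c : K) (s : T) : << c *g s >> = c *: (<< s >> : {malg K[T]}).
Proof.
apply/malgP => s'; rewrite mcoeffZ !mcoeffU.
by case: (s == s'); rewrite ?mulr1 ?mulr0.
Qed.

Lemma lin_uniq (L : {malg K[T]} -> V) : islin L ->
  forall x, L x = lin_ext (fun s => L << s >>) x.
Proof.
move=> HL x; rewrite {1}(monalgE x) islin_sum //.
by apply: eq_bigr => s _; rewrite malgUZ islinZ.
Qed.

Lemma lin_eq (L1 L2 : {malg K[T]} -> V) : islin L1 -> islin L2 ->
  (forall s, L1 << s >> = L2 << s >>) -> forall x, L1 x = L2 x.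
Proof.
move=> h1 h2 e x; rewrite (@lin_uniq L1 h1) (@lin_uniq L2 h2).
by rewrite /lin_ext; apply: eq_bigr => s _; rewrite e.
Qed.

Lemma lin_ext_ext (f g : T -> V) x : (forall s, f s = g s) ->
  lin_ext f x = lin_ext g x.
Proof. by move=> e; apply: eq_bigr => s _; rewrite e. Qed.

Lemma lin_ext_funlin (f g : T -> V) k x :
  lin_ext (fun s => k *: f s + g s) x = k *: lin_ext f x + lin_ext g x.
Proof.
rewrite /lin_ext scaler_sumr -big_split /=; apply: eq_bigr => s _.
by rewrite scalerDr !scalerA mulrC.
Qed.

Lemma lin_pred (R : V -> Prop) (L : {malg K[T]} -> V) : islin L ->
  R 0 -> (forall x y, R x -> R y -> R (x + y)) ->
  (forall k x, R x -> R (k *: x)) ->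
  (forall s, R (L << s >>)) -> forall x, R (L x).
Proof.
move=> HL R0 RD RZ Rs x; rewrite (@lin_uniq L HL) /lin_ext.
elim: (msupp x : seq T) => [|s r IH]; first by rewrite big_nil.
by rewrite big_cons; apply: RD => //; apply: RZ.
Qed.

End Lin.

Section Bilin.
Context {K : fieldType} {T1 T2 : choiceType} {V : lmodType K}.
Context (f : T1 -> T2 -> V).

Lemma bilin_extE x y :
  bilin_ext f x y = lin_ext (fun s => lin_ext (f s) y) x.
Proof.
rewrite /bilin_ext /lin_ext; apply: eq_bigr => s _.
by rewrite scaler_sumr; apply: eq_bigr => t _; rewrite scalerA.
Qed.

Lemma bilin_extU s t : bilin_ext f << s >> << t >> = f s t.
Proof. by rewrite bilin_extE !lin_extU. Qed.

Lemma bilin_lin1 y : islin (fun x => bilin_ext f x y).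
Proof. by move=> k x x'; rewrite !bilin_extE lin_ext_lin. Qed.

Lemma bilin_lin2 x : islin (fun y => bilin_ext f x y).
Proof.
move=> k y y'; rewrite !bilin_extE -lin_ext_funlin.
by apply: lin_ext_ext => s; rewrite lin_ext_lin.
Qed.

Lemma bilin_swap x y :
  bilin_ext f x y = bilin_ext (fun t s => f s t) y x.
Proof.
rewrite /bilin_ext exchange_big /=; apply: eq_bigr => t _.
by apply: eq_bigr => s _; rewrite mulrC.
Qed.
End Bilin.

Section IslinOps.
Context {K : fieldType} {U W : lmodType K}.
Lemma islinDf (f g : U -> W) : islin f -> islin g -> islin (fun x => f x + g x).
Proof. by move=> hf hg k x y; rewrite hf hg scalerDr addrACA. Qed.
Lemma islinNf (f : U -> W) : islin f -> islin (fun x => - f x).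
Proof. by move=> hf k x y; rewrite hf opprD scalerN. Qed.
Lemma islinZf (c : K) (f : U -> W) : islin f -> islin (fun x => c *: f x).
Proof. by move=> hf k x y; rewrite hf scalerDr !scalerA mulrC. Qed.
Lemma islinBf (f g : U -> W) : islin f -> islin g -> islin (fun x => f x - g x).
Proof. by move=> hf hg; apply: islinDf => //; apply: islinNf. Qed.
Lemma islin_id : islin (fun x : U => x).
Proof. by []. Qed.
End IslinOps.

Section Tensor1.
Context {K : fieldType} {A : comAlgType K}.
Local Notation FT := (@FT K A).
Local Notation wvec := (@wvec K A).
Local Notation tnull := (@tnull K A).
Local Notation teqv := (@teqv K A).
Local Notation consT := (@consT K A).
Local Notation Mq := (@Mq K A).
Local Notation wmul := (@wmul K A).

Lemma tnull_eq {x y} : x = y -> tnull x -> tnull y.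
Proof. by move=> ->. Qed.
Lemma tnull0 : tnull 0.
Proof.
apply: (tnull_eq _ (tnull_scale (0:K) (@tnull_gen K A [::] [::] 0 0 0))).
by rewrite scale0r.
Qed.
Lemma tnullN x : tnull x -> tnull (- x).
Proof. by move/(tnull_scale (-1)); rewrite scaleN1r. Qed.
Lemma tnullB x y : tnull x -> tnull y -> tnull (x - y).
Proof. by move=> hx hy; apply: tnull_add => //; apply: tnullN. Qed.

Lemma teqv_refl x : teqv x x.
Proof. by rewrite /teqv subrr; apply: tnull0. Qed.
Lemma teqv_sym x y : teqv x y -> teqv y x.
Proof. by rewrite /teqv => /tnullN; rewrite opprB. Qed.
Lemma teqv_trans x y z : teqv x y -> teqv y z -> teqv x z.
Proof.
rewrite /teqv => h1 h2; have := tnull_add h1 h2.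
by rewrite addrA subrK.
Qed.

Lemma tnull_lin (L : FT -> FT) : islin L ->
  (forall u v a b k, tnull (L (wvec (u ++ (k *: a + b) :: v) - k *: wvec (u ++ a :: v)
             - wvec (u ++ b :: v)))) ->
  forall x, tnull x -> tnull (L x).
Proof.
move=> HL hg x; elim => [u v a b k|y z _ hy _ hz|k y _ hy].
- exact: hg.
- by rewrite (islinD HL); apply: tnull_add.
- by rewrite (islinZ HL); apply: tnull_scale.
Qed.

Lemma tnull_basis (L : FT -> FT) : islin L ->
  (forall s, tnull (L (wvec s))) -> forall x, tnull (L x).
Proof.
move=> HL h x; apply: (@lin_pred _ _ _ tnull L HL) => //.
- exact: tnull0.
- by move=> ? ? ; apply: tnull_add.
- by move=> ? ?; apply: tnull_scale.
Qed.

Lemma consT_lin a : islin (consT a).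
Proof. exact: lin_ext_lin. Qed.
Lemma consTU a w : consT a (wvec w) = wvec (a :: w).
Proof. exact: lin_extU. Qed.

Lemma consT_tnull a x : tnull x -> tnull (consT a x).
Proof.
apply: tnull_lin; first exact: consT_lin.
move=> u v b c k; rewrite !(islinB (consT_lin a)) (islinZ (consT_lin a)) !consTU.
exact: (tnull_gen (a :: u)).
Qed.

Lemma consT_letter (k : K) (a b : A) x :
  tnull (consT (k *: a + b) x - k *: consT a x - consT b x).
Proof.
apply: (@tnull_basis (fun x => consT (k *: a + b) x - k *: consT a x - consT b x)).
  by apply: islinBf; [apply: islinBf; [|apply: islinZf]|]; apply: consT_lin.
by move=> s; rewrite !consTU; exact: (tnull_gen [::]).
Qed.

End Tensor1.

Section Comb.
Context {K : fieldType} {V : lmodType K}.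
Lemma acA3 (a1 a2 a3 b1 b2 b3 : V) :
  (a1 + a2 + a3) + (b1 + b2 + b3) = (a1 + b1) + (a2 + b2) + (a3 + b3).
Proof. by rewrite addrACA; congr (_ + _); rewrite addrACA. Qed.
Lemma comb3 (k : K) (x1 x2 x3 y1 y2 y3 z1 z2 z3 : V) :
  (x1 + x2 + x3) - k *: (y1 + y2 + y3) - (z1 + z2 + z3) =
  (x1 - k *: y1 - z1) + (x2 - k *: y2 - z2) + (x3 - k *: y3 - z3).
Proof. by rewrite !scalerDr !opprD (acA3 x1 x2 x3) [LHS]acA3. Qed.
Lemma combN (k : K) (x y z : V) : - x - k *: (- y) - (- z) = - (x - k *: y - z).
Proof. by rewrite scalerN !opprD !opprK. Qed.
Lemma combZ (c k : K) (x y z : V) :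
  c *: x - k *: (c *: y) - c *: z = c *: (x - k *: y - z).
Proof. by rewrite !scalerBr !scalerA mulrC. Qed.
Lemma lin_comb (W : lmodType K) (L : V -> W) : islin L -> forall (k : K) x y z,
  L x - k *: L y - L z = L (x - k *: y - z).
Proof. by move=> HL k x y z; rewrite !(islinB HL) (islinZ HL). Qed.
End Comb.
Arguments lin_comb {K V W L}.

Section Tensor2.
Context {K : fieldType} {A : comAlgType K} {q : wtype K}.
Local Notation FT := (@FT K A).
Local Notation wvec := (@wvec K A).
Local Notation tnull := (@tnull K A).
Local Notation teqv := (@teqv K A).
Local Notation consT := (@consT K A).
Local Notation Mq := (@Mq K A).
Local Notation wmul := (@wmul K A).

Lemma Mq_lin a b : islin (Mq q a b).
Proof.
case: q => [th||] /=.
- by apply: islinZf; apply: consT_lin.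
- by apply: islinNf; apply: islin_comp; apply: consT_lin.
- by apply: islinNf; apply: islin_comp; apply: consT_lin.
Qed.

Definition MqW (a b : A) (s : seq A) : FT :=
  match q with
  | Wtheta th => th *: wvec (a * b :: s)
  | Wright => - wvec (1 :: a * b :: s)
  | Wleft => - wvec (a * b :: 1 :: s)
  end.

Lemma MqU a b s : Mq q a b (wvec s) = MqW a b s.
Proof. by rewrite /MqW; case: q => [th||] /=; rewrite !consTU. Qed.

Lemma Mq_tnull a b x : tnull x -> tnull (Mq q a b x).
Proof.
case: q => [th||] /= h.
- by apply: tnull_scale; apply: consT_tnull.
- by apply: tnullN; do 2 apply: consT_tnull.
- by apply: tnullN; do 2 apply: consT_tnull.
Qed.

Lemma Mq_letter (k : K) a b c x :
  tnull (Mq q (k *: a + b) c x - k *: Mq q a c x - Mq q b c x).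
Proof.
have HL : islin (fun x => Mq q (k *: a + b) c x - k *: Mq q a c x - Mq q b c x).
  by apply: islinBf; [apply: islinBf; [|apply: islinZf]|]; apply: Mq_lin.
apply: (@tnull_basis _ _ _ HL) => s; rewrite !MqU /MqW mulrDl -scalerAl.
case: q => [th||].
- by rewrite combZ; apply: tnull_scale; apply: (tnull_gen [::]).
- by rewrite combN; apply: tnullN; apply: (tnull_gen [:: 1]).
- by rewrite combN; apply: tnullN; apply: (tnull_gen [::]).
Qed.

Lemma Mq_comm a b x : Mq q a b x = Mq q b a x.
Proof. by case: q => [th||] /=; rewrite mulrC. Qed.

Lemma wmul_cons a u b v : wmul q (a :: u) (b :: v) =
  consT a (wmul q u (b :: v)) + consT b (wmul q (a :: u) v) + Mq q a b (wmul q u v).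
Proof. reflexivity. Qed.

Lemma wmul_nil_l t : wmul q [::] t = wvec t.
Proof. reflexivity. Qed.

Lemma wmul_nil_r s : wmul q s [::] = wvec s.
Proof. by case: s. Qed.
Lemma wmul_comm s t : wmul q s t = wmul q t s.
Proof.
move: {2}(size s + size t)%N (leqnn (size s + size t)%N) => n.
elim: n s t => [|n IH] s t.
  case: s => [|a u]; first by rewrite wmul_nil_r.
  by move=> h; rewrite /= addSn in h.
case: s => [|a u]; first by rewrite wmul_nil_r.
case: t => [|b v]; first by rewrite wmul_nil_r.
move=> h; rewrite /= addSn addnS !ltnS in h.
rewrite [LHS]wmul_cons [RHS]wmul_cons.
rewrite (IH u (b :: v)); last by rewrite /= addnS.
rewrite (IH (a :: u) v); last by rewrite /= addSn.
rewrite (IH u v); last exact: ltnW.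
by rewrite (Mq_comm a b) (addrC (consT a _)).
Qed.
Lemma wmul_ml u v (k : K) a b t :
  tnull (wmul q (u ++ (k *: a + b) :: v) t - k *: wmul q (u ++ a :: v) t
         - wmul q (u ++ b :: v) t).
Proof.
elim: u t => [|e u IH] t.
- elim: t => [|d t IHt].
    by rewrite !wmul_nil_r; apply: (tnull_gen [::]).
  rewrite cat0s cat0s cat0s.
  rewrite (wmul_cons (k *: a + b)) (wmul_cons a) (wmul_cons b) comb3.
  apply: tnull_add; first apply: tnull_add.
  + exact: consT_letter.
  + by rewrite (lin_comb (consT_lin _)); apply: consT_tnull.
  + exact: Mq_letter.
- elim: t => [|d t IHt].
    by rewrite !wmul_nil_r; apply: (tnull_gen (e :: u)).
  rewrite !cat_cons (wmul_cons e (u ++ _ :: v)) (wmul_cons e (u ++ a :: v))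
     (wmul_cons e (u ++ b :: v)) comb3.
  apply: tnull_add; first apply: tnull_add.
  + by rewrite (lin_comb (consT_lin _)); apply: consT_tnull.
  + by rewrite (lin_comb (consT_lin _)); apply: consT_tnull.
  + by rewrite (lin_comb (Mq_lin _ _)); apply: Mq_tnull.
Qed.

Lemma wmul_ml_r u v (k : K) a b s :
  tnull (wmul q s (u ++ (k *: a + b) :: v) - k *: wmul q s (u ++ a :: v)
         - wmul q s (u ++ b :: v)).
Proof. by rewrite !(wmul_comm s); apply: wmul_ml. Qed.
End Tensor2.

Section LinComb.
Context {K : fieldType} {T : choiceType} {V : lmodType K}.
Lemma lin_ext_comb (f1 f2 f3 : T -> V) (k : K) y :
  lin_ext (fun t => f1 t - k *: f2 t - f3 t) y =
  lin_ext f1 y - k *: lin_ext f2 y - lin_ext f3 y.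
Proof.
rewrite /lin_ext scaler_sumr -!sumrB; apply: eq_bigr => s _.
by rewrite !scalerBr !scalerA mulrC.
Qed.
End LinComb.

Section Tensor3.
Context {K : fieldType} {A : comAlgType K} {q : wtype K}.
Local Notation FT := (@FT K A).
Local Notation FP := (@FP K A).
Local Notation wvec := (@wvec K A).
Local Notation pvec := (@pvec K A).
Local Notation tnull := (@tnull K A).
Local Notation teqv := (@teqv K A).
Local Notation peqv := (@peqv K A).
Local Notation consT := (@consT K A).
Local Notation pconsT := (@pconsT K A).
Local Notation flat := (@flat K A).
Local Notation Mq := (@Mq K A).
Local Notation wmul := (@wmul K A).
Local Notation pmul := (@pmul K A).
Local Notation PA := (@PA K A).

Lemma flat_lin : islin flat. Proof. exact: lin_ext_lin. Qed.
Lemma flatU a w : flat (pvec (a, w)) = wvec (a :: w).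
Proof. exact: lin_extU. Qed.
Lemma pconsT_lin a : islin (pconsT a). Proof. exact: lin_ext_lin. Qed.
Lemma pconsTU a w : pconsT a (wvec w) = pvec (a, w).
Proof. exact: lin_extU. Qed.
Lemma PA_lin : islin PA. Proof. exact: lin_ext_lin. Qed.
Lemma PAU a w : PA (pvec (a, w)) = pvec (1, a :: w).
Proof. exact: lin_extU. Qed.

Lemma flat_pconsT c W : flat (pconsT c W) = consT c W.
Proof.
apply: (lin_eq (fun W => flat (pconsT c W)) (consT c)).
- by apply: islin_comp; [apply: flat_lin | apply: pconsT_lin].
- exact: consT_lin.
- by move=> s; rewrite pconsTU flatU consTU.
Qed.

Lemma flat_PA x : flat (PA x) = consT 1 (flat x).
Proof.
apply: (lin_eq (fun x => flat (PA x)) (fun x => consT 1 (flat x))).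
- by apply: islin_comp; [apply: flat_lin | apply: PA_lin].
- by apply: islin_comp; [apply: consT_lin | apply: flat_lin].
- by case=> a w; rewrite PAU !flatU consTU.
Qed.

Lemma pmul_lin1 y : islin (fun x => pmul q x y).
Proof. exact: bilin_lin1. Qed.
Lemma pmul_lin2 x : islin (fun y => pmul q x y).
Proof. exact: bilin_lin2. Qed.
Lemma pmulU p p' : pmul q (pvec p) (pvec p') = pconsT (p.1 * p'.1) (wmul q p.2 p'.2).
Proof. exact: bilin_extU. Qed.

Definition mw (s t : seq A) : FT :=
  match s, t with
  | a :: u, b :: v => consT (a * b) (wmul q u v)
  | _, _ => 0
  end.
Definition Mflat : FT -> FT -> FT := bilin_ext mw.

Lemma flat_pmul x y : flat (pmul q x y) = Mflat (flat x) (flat y).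
Proof.
pose L1 := fun x => flat (pmul q x y).
pose L2 := fun x => Mflat (flat x) (flat y).
apply: (lin_eq L1 L2).
- by apply: islin_comp; [apply: flat_lin | apply: pmul_lin1].
- by apply: (islin_comp (fun z => Mflat z (flat y)) flat); [apply: bilin_lin1 | apply: flat_lin].
move=> p; rewrite /L1 /L2.
apply: (lin_eq (fun y => flat (pmul q (pvec p) y))
               (fun y => Mflat (flat (pvec p)) (flat y))).
- by apply: islin_comp; [apply: flat_lin | apply: pmul_lin2].
- by apply: (islin_comp (fun z => Mflat (flat (pvec p)) z) flat); [apply: bilin_lin2 | apply: flat_lin].
move=> p'; case: p => a u; case: p' => b v.
by rewrite pmulU flat_pconsT !flatU /Mflat bilin_extU.
Qed.

Lemma mw_nil_r s : mw s [::] = 0.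
Proof. by case: s. Qed.

Lemma mw_comm s t : mw s t = mw t s.
Proof. by case: s => [|a u]; case: t => [|b v] //=; rewrite mulrC wmul_comm. Qed.

Lemma Mflat_comm x y : Mflat x y = Mflat y x.
Proof.
rewrite /Mflat bilin_swap /bilin_ext; apply: eq_bigr => s _; apply: eq_bigr => t _.
by rewrite mw_comm.
Qed.

Lemma Mflat_tnull1 x y : tnull x -> tnull (Mflat x y).
Proof.
apply: (tnull_lin (fun x => Mflat x y)); first exact: bilin_lin1.
move=> u v a b k.
rewrite -(lin_comb (L := fun x => Mflat x y)); last exact: bilin_lin1.
rewrite /Mflat !bilin_extE !lin_extU -lin_ext_comb.
apply: (tnull_basis (lin_ext _)); first exact: lin_ext_lin.
move=> t; rewrite lin_extU.
case: t => [|d t]; first by rewrite !mw_nil_r scaler0 !subr0; apply: tnull0.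
case: u => [|e u] /=.
- by rewrite mulrDl -scalerAl; apply: consT_letter.
- by rewrite (lin_comb (consT_lin _)); apply: consT_tnull; apply: wmul_ml.
Qed.

Lemma Mflat_tnull2 x y : tnull y -> tnull (Mflat x y).
Proof. by rewrite Mflat_comm; apply: Mflat_tnull1. Qed.

End Tensor3.

Section Tensor4.
Context {K : fieldType} {A : comAlgType K} {q : wtype K}.
Local Notation FT := (@FT K A).
Local Notation FP := (@FP K A).
Local Notation wvec := (@wvec K A).
Local Notation pvec := (@pvec K A).
Local Notation tnull := (@tnull K A).
Local Notation teqv := (@teqv K A).
Local Notation peqv := (@peqv K A).
Local Notation consT := (@consT K A).
Local Notation pconsT := (@pconsT K A).
Local Notation flat := (@flat K A).
Local Notation wmul := (@wmul K A).
Local Notation pmul := (@pmul K A).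
Local Notation PA := (@PA K A).

Lemma peqv_refl x : peqv x x. Proof. exact: teqv_refl. Qed.
Lemma peqv_sym x y : peqv x y -> peqv y x. Proof. exact: teqv_sym. Qed.
Lemma peqv_trans x y z : peqv x y -> peqv y z -> peqv x z.
Proof. exact: teqv_trans. Qed.
Lemma peqv_eq x y : x = y -> peqv x y. Proof. by move=> ->; apply: peqv_refl. Qed.

Lemma peqv_add x x' y y' : peqv x x' -> peqv y y' -> peqv (x + y) (x' + y').
Proof.
rewrite /peqv /teqv !(islinD flat_lin) => h1 h2.
by rewrite opprD addrACA; apply: tnull_add.
Qed.

Lemma peqv_scale (k : K) x x' : peqv x x' -> peqv (k *: x) (k *: x').
Proof.
rewrite /peqv /teqv !(islinZ flat_lin) -scalerBr; exact: tnull_scale.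
Qed.

Lemma peqv_mul x x' y y' : peqv x x' -> peqv y y' -> peqv (pmul q x y) (pmul q x' y').
Proof.
rewrite /peqv /teqv !flat_pmul => h1 h2.
have -> : @Mflat K A q (flat x) (flat y) - @Mflat K A q (flat x') (flat y') =
  @Mflat K A q (flat x - flat x') (flat y) + @Mflat K A q (flat x') (flat y - flat y').
  rewrite /Mflat (islinB (bilin_lin1 _ _)) (islinB (bilin_lin2 _ _)).
  by rewrite addrA subrK.
by apply: tnull_add; [apply: Mflat_tnull1 | apply: Mflat_tnull2].
Qed.

Lemma peqv_P x x' : peqv x x' -> peqv (PA x) (PA x').
Proof.
rewrite /peqv /teqv !flat_PA -(islinB (consT_lin _)); exact: consT_tnull.
Qed.

Variable (dag : A -> A).
Hypothesis dag_lin : forall (k : K) (a b : A), dag (k *: a + b) = k *: dag a + dag b.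

Definition Dag : FT -> FT := lin_ext (fun w => wvec (map dag w)).

Lemma Dag_lin : islin Dag. Proof. exact: lin_ext_lin. Qed.
Lemma DagU w : Dag (wvec w) = wvec (map dag w). Proof. exact: lin_extU. Qed.

Lemma pdagU a w : pdag dag (pvec (a, w)) = pvec (dag a, map dag w).
Proof. exact: lin_extU. Qed.
Lemma pdag_lin : islin (pdag dag). Proof. exact: lin_ext_lin. Qed.

Lemma flat_pdag x : flat (pdag dag x) = Dag (flat x).
Proof.
apply: (lin_eq (fun x => flat (pdag dag x)) (fun x => Dag (flat x))).
- by apply: islin_comp; [apply: flat_lin | apply: pdag_lin].
- by apply: islin_comp; [apply: Dag_lin | apply: flat_lin].
- by case=> a w; rewrite pdagU !flatU DagU.
Qed.

Lemma Dag_tnull x : tnull x -> tnull (Dag x).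
Proof.
apply: tnull_lin; first exact: Dag_lin.
move=> u v a b k; rewrite -(lin_comb Dag_lin) !DagU !map_cat /= dag_lin.
exact: tnull_gen.
Qed.

Lemma peqv_dag x x' : peqv x x' -> peqv (pdag dag x) (pdag dag x').
Proof.
rewrite /peqv /teqv !flat_pdag -(islinB Dag_lin); exact: Dag_tnull.
Qed.

End Tensor4.

Lemma zR (V : zmodType) (P Q R S : V) : -(P + Q - R + S - Q) = -P - S + R.
Proof.
rewrite addrAC [P + Q - R - Q]addrAC addrK opprD opprB.
by rewrite [RHS]addrC addrA.
Qed.

Section Tensor5.
Context {K : fieldType} {A : comAlgType K} {q : wtype K}.
Local Notation FT := (@FT K A).
Local Notation wvec := (@wvec K A).
Local Notation consT := (@consT K A).
Local Notation Mq := (@Mq K A).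
Local Notation wmul := (@wmul K A).
Local Notation tmul := (@tmul K A q).

Lemma tmul_lin1 y : islin (fun x => tmul x y). Proof. exact: bilin_lin1. Qed.
Lemma tmul_lin2 x : islin (fun y => tmul x y). Proof. exact: bilin_lin2. Qed.
Lemma tmulU s t : tmul (wvec s) (wvec t) = wmul q s t. Proof. exact: bilin_extU. Qed.

Lemma tmul_comm x y : tmul x y = tmul y x.
Proof.
rewrite /tmul bilin_swap /bilin_ext; apply: eq_bigr => s _; apply: eq_bigr => t _.
by rewrite wmul_comm.
Qed.

Lemma bilin_eq (F G : FT -> FT -> FT) :
  (forall y, islin (fun x => F x y)) -> (forall x, islin (F x)) ->
  (forall y, islin (fun x => G x y)) -> (forall x, islin (G x)) ->
  (forall s t, F (wvec s) (wvec t) = G (wvec s) (wvec t)) ->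
  forall x y, F x y = G x y.
Proof.
move=> F1 F2 G1 G2 e x y.
apply: (lin_eq (fun x => F x y) (fun x => G x y)); [exact: F1 | exact: G1 | move=> s].
by apply: (lin_eq (F (wvec s)) (G (wvec s))); [exact: F2 | exact: G2 | exact: e].
Qed.

Lemma tmul_nil_l y : tmul (wvec [::]) y = y.
Proof.
apply: (lin_eq (tmul (wvec [::])) id); [exact: tmul_lin2 | by [] |].
by move=> t; rewrite tmulU wmul_nil_l.
Qed.

Lemma tmul_nil_r y : tmul y (wvec [::]) = y.
Proof. by rewrite tmul_comm tmul_nil_l. Qed.

Lemma tmul_consT a b x y :
  tmul (consT a x) (consT b y) =
  consT a (tmul x (consT b y)) + consT b (tmul (consT a x) y) + Mq q a b (tmul x y).
Proof.
move: x y; apply: (bilin_eq (fun x y => tmul (consT a x) (consT b y))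
  (fun x y => consT a (tmul x (consT b y)) + consT b (tmul (consT a x) y) + Mq q a b (tmul x y))).
- move=> y; apply: (islin_comp (fun z => tmul z _)); [apply: tmul_lin1 | apply: consT_lin].
- move=> x; apply: islin_comp; [apply: tmul_lin2 | apply: consT_lin].
- move=> y; apply: islinDf; first apply: islinDf.
  + apply: islin_comp; [apply: consT_lin | apply: tmul_lin1].
  + apply: islin_comp; [apply: consT_lin|].
    apply: (islin_comp (fun z => tmul z y)); [apply: tmul_lin1 | apply: consT_lin].
  + apply: islin_comp; [apply: Mq_lin | apply: tmul_lin1].
- move=> x; apply: islinDf; first apply: islinDf.
  + apply: islin_comp; [apply: consT_lin|].
    apply: (islin_comp (tmul x)); [apply: tmul_lin2 | apply: consT_lin].
  + apply: islin_comp; [apply: consT_lin | apply: tmul_lin2].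
  + apply: islin_comp; [apply: Mq_lin | apply: tmul_lin2].
- by move=> s t; rewrite !consTU !tmulU wmul_cons.
Qed.

Definition Tq (a b c : A) (W : FT) : FT :=
  match q with
  | Wtheta th => (th * th) *: consT (a * b * c) W
  | Wright => consT 1 (consT 1 (consT (a * b * c) W))
  | Wleft => consT (a * b * c) (consT 1 (consT 1 W))
  end.

Lemma wmul_left1 (hq : q = Wleft) w t : wmul q (1 :: w) t = consT 1 (wmul q w t).
Proof.
elim: t => [|d t IH]; first by rewrite !wmul_nil_r consTU.
rewrite wmul_cons IH hq /= mul1r.
by rewrite addrK.
Qed.

Lemma tmul_left1 (hq : q = Wleft) x y : tmul (consT 1 x) y = consT 1 (tmul x y).
Proof.
move: x y; apply: (bilin_eq (fun x y => tmul (consT 1 x) y) (fun x y => consT 1 (tmul x y))).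
- move=> y; apply: (islin_comp (fun z => tmul z y)); [apply: tmul_lin1 | apply: consT_lin].
- move=> x; apply: tmul_lin2.
- move=> y; apply: islin_comp; [apply: consT_lin | apply: tmul_lin1].
- move=> x; apply: islin_comp; [apply: consT_lin | apply: tmul_lin2].
- by move=> s t; rewrite consTU !tmulU wmul_left1.
Qed.

Opaque Defs.tmul Defs.consT Defs.wmul lin_ext bilin_ext.
Lemma MqT th (E : q = Wtheta th) a b x : Mq q a b x = th *: consT (a * b) x.
Proof. by rewrite E. Qed.
Lemma MqR (E : q = Wright) a b x : Mq q a b x = - consT 1 (consT (a * b) x).
Proof. by rewrite E. Qed.
Lemma MqL (E : q = Wleft) a b x : Mq q a b x = - consT (a * b) (consT 1 x).
Proof. by rewrite E. Qed.
Lemma TqT th (E : q = Wtheta th) a b c x : Tq a b c x = (th * th) *: consT (a * b * c) x.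
Proof. by rewrite /Tq E. Qed.
Lemma TqR (E : q = Wright) a b c x : Tq a b c x = consT 1 (consT 1 (consT (a * b * c) x)).
Proof. by rewrite /Tq E. Qed.
Lemma TqL (E : q = Wleft) a b c x : Tq a b c x = consT (a * b * c) (consT 1 (consT 1 x)).
Proof. by rewrite /Tq E. Qed.

Lemma q_cases : (exists th, q = Wtheta th) \/ q = Wright \/ q = Wleft.
Proof. by case: q => [th||]; [left; exists th | right; left | right; right]. Qed.

Lemma tmul_Mq a b c W Z :
  tmul (Mq q a b W) (consT c Z) =
  Mq q a b (tmul W (consT c Z)) + consT c (tmul (Mq q a b W) Z) + Tq a b c (tmul W Z).
Proof.
have [[th E]|[E|E]] := q_cases.
- rewrite !(MqT _ E) (TqT _ E) (islinZ (tmul_lin1 _)) tmul_consT (MqT _ E).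
  by rewrite (islinZ (tmul_lin1 _)) (islinZ (consT_lin _)) !scalerDr scalerA.
- rewrite !(MqR E) (TqR E).
  rewrite !(islinN (tmul_lin1 _)).
  rewrite tmul_consT [tmul (consT (a * b) W) _]tmul_consT.
  rewrite (MqR E) (MqR E) mul1r.
  rewrite (islinN (consT_lin _)) !(islinD (consT_lin _)) !(islinN (consT_lin _)).
  exact: zR.
- rewrite !(MqL E) (TqL E).
  rewrite !(islinN (tmul_lin1 _)).
  rewrite tmul_consT (tmul_left1 E W (consT c Z)) (tmul_left1 E W Z) (MqL E).
  rewrite (islinN (consT_lin c)).
  by rewrite opprD opprK opprD.
Qed.

Lemma zE (V : zmodType) (A1 C1 M1 B1 C2 M2 N C3 T : V) :
  (A1 + C1 + M1) + (B1 + C2 + M2) + (N + C3 + T) =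
  A1 + B1 + (C1 + C2 + C3) + M1 + M2 + N + T.
Proof. by rewrite !addrA (ACl (1*4*2*5*8*3*6*7*9)). Qed.
Lemma zP (V : zmodType) (x1 x2 x3 x4 x5 x6 x7 : V) :
  x1 + x2 + x3 + x4 + x5 + x6 + x7 = x2 + x3 + x1 + x6 + x4 + x5 + x7.
Proof. by rewrite (ACl (2*3*1*6*4*5*7)). Qed.

Definition Sx a X b Y c Z :=
  consT a (tmul (tmul X (consT b Y)) (consT c Z))
  + consT b (tmul (tmul (consT a X) Y) (consT c Z))
  + consT c (tmul (tmul (consT a X) (consT b Y)) Z)
  + Mq q a c (tmul (tmul X (consT b Y)) Z)
  + Mq q b c (tmul (tmul (consT a X) Y) Z)
  + Mq q a b (tmul (tmul X Y) (consT c Z))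
  + Tq a b c (tmul (tmul X Y) Z).

Lemma expand a X b Y c Z :
  tmul (tmul (consT a X) (consT b Y)) (consT c Z) = Sx a X b Y c Z.
Proof.
rewrite /Sx (tmul_consT a b X Y) !(islinD (tmul_lin1 _)).
rewrite [tmul (consT a _) (consT c Z)]tmul_consT [tmul (consT b _) (consT c Z)]tmul_consT.
rewrite tmul_Mq !(islinD (consT_lin c)).
exact: zE.
Qed.
End Tensor5.

Opaque Defs.tmul Defs.consT Defs.wmul lin_ext bilin_ext.

Section Tensor6.
Context {K : fieldType} {A : comAlgType K} {q : wtype K}.
Local Notation FT := (@FT K A).
Local Notation wvec := (@wvec K A).
Local Notation consT := (@consT K A).
Local Notation Mq := (@Mq K A).
Local Notation tmul := (@tmul K A q).

Lemma Tq_perm (a b c : A) (W : FT) : @Tq K A q b c a W = @Tq K A q a b c W.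
Proof. by rewrite /Tq mulrC mulrA. Qed.

Opaque Tq.
Lemma sum7_eq (V : zmodType) (x1 x2 x3 x4 x5 x6 x7 y1 y2 y3 y4 y5 y6 y7 : V) :
  x1 = y1 -> x2 = y2 -> x3 = y3 -> x4 = y4 -> x5 = y5 -> x6 = y6 -> x7 = y7 ->
  x1 + x2 + x3 + x4 + x5 + x6 + x7 = y1 + y2 + y3 + y4 + y5 + y6 + y7.
Proof. by move=> -> -> -> -> -> -> ->. Qed.

Lemma wassoc n : forall s t r, (size s + size t + size r <= n)%N ->
  tmul (tmul (wvec s) (wvec t)) (wvec r) = tmul (wvec s) (tmul (wvec t) (wvec r)).
Proof.
elim: n => [|n IH] s t r h.
  have [-> ->] : s = [::] /\ t = [::] by case: s h => [|? ?]; case: t => [|? ?].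
  by rewrite !tmul_nil_l.
case: s h => [|a X] h; first by rewrite !tmul_nil_l.
case: t h => [|b Y] h; first by rewrite tmul_nil_l tmul_nil_r.
case: r h => [|c Z] h; first by rewrite !tmul_nil_r.
have rot : forall u v w, (size u + size v + size w <= n)%N ->
  tmul (tmul (wvec u) (wvec v)) (wvec w) = tmul (tmul (wvec w) (wvec u)) (wvec v).
  by move=> u v w hs; rewrite tmul_comm IH //; lia.
rewrite [RHS]tmul_comm -(consTU a X) -(consTU b Y) -(consTU c Z).
rewrite [LHS](@expand K A q a (wvec X) b (wvec Y) c (wvec Z)).
rewrite [RHS](@expand K A q b (wvec Y) c (wvec Z) a (wvec X)) /Sx.
rewrite !consTU.
rewrite [LHS]zP.
have sz : (size X + size Y + size Z + 3 <= n.+1)%N by move: h => /=; lia.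
apply: sum7_eq.
- by apply: (f_equal (consT b)); apply: esym; apply: rot => /=; lia.
- by apply: (f_equal (consT c)); apply: esym; apply: rot => /=; lia.
- by apply: (f_equal (consT a)); apply: esym; apply: rot => /=; lia.
- by rewrite [RHS](Mq_comm b a); apply: (f_equal (Mq q a b)); apply: esym; apply: rot => /=; lia.
- by rewrite [RHS](Mq_comm c a); apply: (f_equal (Mq q a c)); apply: esym; apply: rot => /=; lia.
- by apply: (f_equal (Mq q b c)); apply: esym; apply: rot => /=; lia.
- by rewrite [RHS]Tq_perm; apply: (f_equal (@Tq K A q a b c)); apply: esym; apply: rot => /=; lia.
Qed.
End Tensor6.

Section BilinG.
Context {K : fieldType} {T1 T2 : choiceType} {V : lmodType K}.
Lemma bilin_eqG (F G : {malg K[T1]} -> {malg K[T2]} -> V) :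
  (forall y, islin (fun x => F x y)) -> (forall x, islin (F x)) ->
  (forall y, islin (fun x => G x y)) -> (forall x, islin (G x)) ->
  (forall s t, F << s >> << t >> = G << s >> << t >>) ->
  forall x y, F x y = G x y.
Proof.
move=> F1 F2 G1 G2 e x y.
apply: (lin_eq (fun x => F x y) (fun x => G x y)); [exact: F1 | exact: G1 | move=> s].
by apply: (lin_eq (F << s >>) (G << s >>)); [exact: F2 | exact: G2 | exact: e].
Qed.
End BilinG.

Opaque Defs.tmul Defs.consT Defs.wmul lin_ext bilin_ext Defs.pconsT Defs.pmul Defs.PA Defs.flat.

Section Tensor7.
Context {K : fieldType} {A : comAlgType K} {q : wtype K}.
Local Notation FT := (@FT K A).
Local Notation FP := (@FP K A).
Local Notation wvec := (@wvec K A).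
Local Notation pvec := (@pvec K A).
Local Notation consT := (@consT K A).
Local Notation pconsT := (@pconsT K A).
Local Notation Mq := (@Mq K A).
Local Notation wmul := (@wmul K A).
Local Notation tmul := (@tmul K A q).
Local Notation pmul := (@pmul K A q).
Local Notation PA := (@PA K A).

Lemma tassoc x y z : tmul (tmul x y) z = tmul x (tmul y z).
Proof.
apply: (lin_eq (fun x => tmul (tmul x y) z) (fun x => tmul x (tmul y z))).
- by apply: (islin_comp (fun u => tmul u z)); apply: tmul_lin1.
- exact: tmul_lin1.
move=> s; move: y z.
apply: (bilin_eq (fun y z => tmul (tmul (wvec s) y) z) (fun y z => tmul (wvec s) (tmul y z))).
- by move=> z; apply: (islin_comp (fun u => tmul u z)); [apply: tmul_lin1 | apply: tmul_lin2].
- by move=> y; apply: tmul_lin2.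
- by move=> z; apply: islin_comp; [apply: tmul_lin2 | apply: tmul_lin1].
- by move=> y; apply: islin_comp; apply: tmul_lin2.
- by move=> t r; exact: (@wassoc K A q _ s t r (leqnn _)).
Qed.

Lemma pmul_pconsT a U c W : pmul (pvec (a, U)) (pconsT c W) = pconsT (a * c) (tmul (wvec U) W).
Proof.
apply: (lin_eq (fun W => pmul (pvec (a, U)) (pconsT c W)) (fun W => pconsT (a * c) (tmul (wvec U) W))).
- by apply: islin_comp; [apply: pmul_lin2 | apply: pconsT_lin].
- by apply: islin_comp; [apply: pconsT_lin | apply: tmul_lin2].
- by move=> w; rewrite pconsTU pmulU tmulU.
Qed.

Lemma pmul_pconsT_l c W b V : pmul (pconsT c W) (pvec (b, V)) = pconsT (c * b) (tmul W (wvec V)).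
Proof.
apply: (lin_eq (fun W => pmul (pconsT c W) (pvec (b, V))) (fun W => pconsT (c * b) (tmul W (wvec V)))).
- by apply: (islin_comp (fun u => pmul u _)); [apply: pmul_lin1 | apply: pconsT_lin].
- by apply: islin_comp; [apply: pconsT_lin | apply: (tmul_lin1 (wvec V))].
- by move=> w; rewrite pconsTU pmulU tmulU.
Qed.

Lemma pmul_assoc x y z : pmul x (pmul y z) = pmul (pmul x y) z.
Proof.
apply: (lin_eq (fun x => pmul x (pmul y z)) (fun x => pmul (pmul x y) z)).
- exact: pmul_lin1.
- by apply: (islin_comp (fun u => pmul u z)); apply: pmul_lin1.
move=> [a U]; move: y z.
apply: (bilin_eqG (fun y z => pmul (pvec (a, U)) (pmul y z)) (fun y z => pmul (pmul (pvec (a, U)) y) z)).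
- by move=> z; apply: islin_comp; [apply: pmul_lin2 | apply: pmul_lin1].
- by move=> y; apply: islin_comp; apply: pmul_lin2.
- by move=> z; apply: (islin_comp (fun u => pmul u z)); [apply: pmul_lin1 | apply: pmul_lin2].
- by move=> y; apply: pmul_lin2.
move=> [b V] [c W].
rewrite [pmul (pvec (b, V)) _]pmulU [pmul (pvec (a, U)) (pvec (b, V))]pmulU /=.
rewrite pmul_pconsT pmul_pconsT_l -!tmulU tassoc mulrA.
done.
Qed.

Transparent Defs.pmul bilin_ext.
Lemma pmul_comm x y : pmul x y = pmul y x.
Proof.
rewrite /pmul bilin_swap /bilin_ext; apply: eq_bigr => s _; apply: eq_bigr => t _.
Show.
by rewrite (mulrC t.1) (wmul_comm t.2).
Qed.

Opaque Defs.pmul bilin_ext.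
Lemma pmul_one x : pmul (pone A) x = x.
Proof.
apply: (lin_eq (pmul (pone A)) id); [exact: pmul_lin2 | by [] |].
by move=> [a w]; rewrite pmulU /= mul1r wmul_nil_l pconsTU.
Qed.

Lemma PA_pconsT c W : PA (pconsT c W) = pconsT 1 (consT c W).
Proof.
apply: (lin_eq (fun W => PA (pconsT c W)) (fun W => pconsT 1 (consT c W))).
- by apply: islin_comp; [apply: PA_lin | apply: pconsT_lin].
- by apply: islin_comp; [apply: pconsT_lin | apply: consT_lin].
- by move=> w; rewrite pconsTU PAU consTU pconsTU.
Qed.

End Tensor7.

Opaque Defs.tmul Defs.consT Defs.wmul lin_ext bilin_ext Defs.pconsT Defs.pmul Defs.PA Defs.flat.

Lemma swap12 (V : zmodType) (x y z : V) : x + y + z = y + x + z.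
Proof. by rewrite (addrC x). Qed.

Section Tensor8.
Context {K : fieldType} {A : comAlgType K}.
Local Notation FT := (@FT K A).
Local Notation FP := (@FP K A).
Local Notation wvec := (@wvec K A).
Local Notation pvec := (@pvec K A).
Local Notation consT := (@consT K A).
Local Notation pconsT := (@pconsT K A).
Local Notation Mq := (@Mq K A).
Local Notation wmul := (@wmul K A).
Local Notation pmul := (@pmul K A).
Local Notation PA := (@PA K A).

Lemma pRq_theta th x y : pmul (Wtheta th) (PA x) (PA y) =
  PA (pmul (Wtheta th) (PA x) y + pmul (Wtheta th) x (PA y)) + th *: PA (pmul (Wtheta th) x y).
Proof.
move: x y; apply: (bilin_eqG (fun x y => pmul (Wtheta th) (PA x) (PA y))
  (fun x y => PA (pmul (Wtheta th) (PA x) y + pmul (Wtheta th) x (PA y)) + th *: PA (pmul (Wtheta th) x y))).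
- by move=> y; apply: (islin_comp (fun u => pmul _ u _)); [apply: pmul_lin1 | apply: PA_lin].
- by move=> x; apply: islin_comp; [apply: pmul_lin2 | apply: PA_lin].
- move=> y; apply: islinDf.
    apply: islin_comp; first exact: PA_lin.
    apply: islinDf; first by apply: (islin_comp (fun u => pmul _ u _)); [apply: pmul_lin1 | apply: PA_lin].
    exact: pmul_lin1.
  by apply: islinZf; apply: islin_comp; [apply: PA_lin | apply: pmul_lin1].
- move=> x; apply: islinDf.
    apply: islin_comp; first exact: PA_lin.
    apply: islinDf; first exact: pmul_lin2.
    by apply: islin_comp; [apply: pmul_lin2 | apply: PA_lin].
  by apply: islinZf; apply: islin_comp; [apply: PA_lin | apply: pmul_lin2].
move=> [a U] [b V].
rewrite PAU PAU pmulU pmulU pmulU pmulU /=.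
rewrite wmul_cons.
rewrite (islinD PA_lin).
rewrite PA_pconsT.
rewrite PA_pconsT PA_pconsT.
rewrite mulr1 mul1r mulr1.
rewrite (islinD (pconsT_lin 1)) (islinD (pconsT_lin 1)).
rewrite (MqT _ (erefl (Wtheta th))) (islinZ (pconsT_lin 1)).
exact: swap12.
Qed.

Lemma pRq_right x y : pmul Wright (PA x) (PA y) =
  PA (pmul Wright (PA x) y + pmul Wright x (PA y)) - PA (PA (pmul Wright x y)).
Proof.
move: x y; apply: (bilin_eqG (fun x y => pmul Wright (PA x) (PA y))
  (fun x y => PA (pmul Wright (PA x) y + pmul Wright x (PA y)) - PA (PA (pmul Wright x y)))).
- by move=> y; apply: (islin_comp (fun u => pmul _ u _)); [apply: pmul_lin1 | apply: PA_lin].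
- by move=> x; apply: islin_comp; [apply: pmul_lin2 | apply: PA_lin].
- move=> y; apply: islinBf.
    apply: islin_comp; first exact: PA_lin.
    apply: islinDf; first by apply: (islin_comp (fun u => pmul _ u _)); [apply: pmul_lin1 | apply: PA_lin].
    exact: pmul_lin1.
  by apply: islin_comp; [apply: PA_lin | apply: islin_comp; [apply: PA_lin | apply: pmul_lin1]].
- move=> x; apply: islinBf.
    apply: islin_comp; first exact: PA_lin.
    apply: islinDf; first exact: pmul_lin2.
    by apply: islin_comp; [apply: pmul_lin2 | apply: PA_lin].
  by apply: islin_comp; [apply: PA_lin | apply: islin_comp; [apply: PA_lin | apply: pmul_lin2]].
move=> [a U] [b V].
rewrite PAU PAU pmulU pmulU pmulU pmulU /=.
rewrite wmul_cons (islinD PA_lin) PA_pconsT PA_pconsT PA_pconsT PA_pconsT.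
rewrite mulr1 mul1r mulr1.
rewrite (islinD (pconsT_lin 1)) (islinD (pconsT_lin 1)).
rewrite (MqR (erefl Wright)) (islinN (pconsT_lin 1)).
exact: swap12.
Qed.

Lemma wmul_U1 U : wmul Wleft U [:: 1] = wvec (1 :: U).
Proof. by rewrite wmul_comm (wmul_left1 (erefl Wleft)) wmul_nil_l consTU. Qed.

Lemma pRq_left x y : pmul Wleft (PA x) (PA y) =
  PA (pmul Wleft (PA x) y + pmul Wleft x (PA y)) - PA (pmul Wleft (pmul Wleft x (PA (pone A))) y).
Proof.
move: x y; apply: (bilin_eqG (fun x y => pmul Wleft (PA x) (PA y))
  (fun x y => PA (pmul Wleft (PA x) y + pmul Wleft x (PA y)) - PA (pmul Wleft (pmul Wleft x (PA (pone A))) y))).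
- by move=> y; apply: (islin_comp (fun u => pmul _ u _)); [apply: pmul_lin1 | apply: PA_lin].
- by move=> x; apply: islin_comp; [apply: pmul_lin2 | apply: PA_lin].
- move=> y; apply: islinBf.
    apply: islin_comp; first exact: PA_lin.
    apply: islinDf; first by apply: (islin_comp (fun u => pmul _ u _)); [apply: pmul_lin1 | apply: PA_lin].
    exact: pmul_lin1.
  by apply: islin_comp; [apply: PA_lin | apply: (islin_comp (fun u => pmul _ u _)); [apply: pmul_lin1 | apply: pmul_lin1]].
- move=> x; apply: islinBf.
    apply: islin_comp; first exact: PA_lin.
    apply: islinDf; first exact: pmul_lin2.
    by apply: islin_comp; [apply: pmul_lin2 | apply: PA_lin].
  by apply: islin_comp; [apply: PA_lin | apply: pmul_lin2].
move=> [a U] [b V].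
rewrite /pone PAU.
rewrite PAU PAU pmulU pmulU pmulU pmulU /=.
rewrite wmul_U1 pconsTU pmulU /= (wmul_left1 (erefl Wleft)).
rewrite wmul_cons (islinD PA_lin) PA_pconsT PA_pconsT PA_pconsT.
rewrite mulr1 mul1r mulr1.
rewrite (islinD (pconsT_lin 1)) (islinD (pconsT_lin 1)).
rewrite (MqL (erefl Wleft)) (islinN (pconsT_lin 1)).
exact: swap12.
Qed.

End Tensor8.

Opaque Defs.tmul Defs.consT Defs.wmul lin_ext bilin_ext Defs.pconsT Defs.pmul Defs.PA Defs.flat Defs.pdag.

Section Tensor9.
Context {K : fieldType} {A : comAlgType K}.
Local Notation FT := (@FT K A).
Local Notation FP := (@FP K A).
Local Notation wvec := (@wvec K A).
Local Notation pvec := (@pvec K A).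
Local Notation consT := (@consT K A).
Local Notation pconsT := (@pconsT K A).
Local Notation Mq := (@Mq K A).
Local Notation wmul := (@wmul K A).
Local Notation pmul := (@pmul K A).
Local Notation PA := (@PA K A).

Variable dag : A -> A.
Hypothesis dag_lin : forall (k : K) (a b : A), dag (k *: a + b) = k *: dag a + dag b.
Hypothesis dag_invol : forall a : A, dag (dag a) = a.
Hypothesis dag_antimul : forall a b : A, dag (a * b) = dag b * dag a.

Lemma dag1 : dag 1 = 1.
Proof.
have h := dag_antimul (dag 1) 1.
rewrite mulr1 dag_invol mulr1 in h.
exact: esym h.
Qed.

Lemma dagM a b : dag (a * b) = dag a * dag b.
Proof. by rewrite dag_antimul mulrC. Qed.

Local Notation Dag := (@Dag K A dag).

Lemma Dag_consT c W : Dag (consT c W) = consT (dag c) (Dag W).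
Proof.
apply: (lin_eq (fun W => Dag (consT c W)) (fun W => consT (dag c) (Dag W))).
- by apply: islin_comp; [apply: (Dag_lin dag) | apply: consT_lin].
- by apply: islin_comp; [apply: consT_lin | apply: (Dag_lin dag)].
- by move=> w; rewrite consTU !(DagU dag) consTU.
Qed.

Lemma Dag_Mq q a b W : Dag (Mq q a b W) = Mq q (dag a) (dag b) (Dag W).
Proof.
case: q => [th||].
- by rewrite !(MqT _ (erefl (Wtheta th))) (islinZ (Dag_lin dag)) Dag_consT dagM.
- by rewrite !(MqR (erefl Wright)) (islinN (Dag_lin dag)) Dag_consT Dag_consT dagM dag1.
- by rewrite !(MqL (erefl Wleft)) (islinN (Dag_lin dag)) Dag_consT Dag_consT dagM dag1.
Qed.

Lemma Dag_wmul q s t : Dag (wmul q s t) = wmul q (map dag s) (map dag t).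
Proof.
elim: s t => [|a u IH] t; first by rewrite wmul_nil_l (DagU dag).
elim: t => [|b v IHt]; first by rewrite !wmul_nil_r (DagU dag).
rewrite wmul_cons (islinD (Dag_lin dag)) (islinD (Dag_lin dag)) Dag_consT Dag_consT Dag_Mq.
by rewrite IH IH IHt /= wmul_cons.
Qed.

Lemma pdag_pconsT c W : pdag dag (pconsT c W) = pconsT (dag c) (Dag W).
Proof.
apply: (lin_eq (fun W => pdag dag (pconsT c W)) (fun W => pconsT (dag c) (Dag W))).
- by apply: islin_comp; [apply: (pdag_lin dag) | apply: pconsT_lin].
- by apply: islin_comp; [apply: pconsT_lin | apply: (Dag_lin dag)].
- by move=> w; rewrite pconsTU (pdagU dag) (DagU dag) pconsTU.
Qed.

Lemma pdag_pmul q x y : pdag dag (pmul q x y) = pmul q (pdag dag y) (pdag dag x).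
Proof.
move: x y; apply: (bilin_eqG (fun x y => pdag dag (pmul q x y)) (fun x y => pmul q (pdag dag y) (pdag dag x))).
- by move=> y; apply: islin_comp; [apply: (pdag_lin dag) | apply: pmul_lin1].
- by move=> x; apply: islin_comp; [apply: (pdag_lin dag) | apply: pmul_lin2].
- by move=> y; apply: islin_comp; [apply: pmul_lin2 | apply: (pdag_lin dag)].
- by move=> x; apply: (islin_comp (fun u => pmul q u _)); [apply: pmul_lin1 | apply: (pdag_lin dag)].
move=> [a U] [b V].
rewrite pmulU pdag_pconsT (pdagU dag) (pdagU dag) pmulU /= Dag_wmul dag_antimul.
by rewrite (wmul_comm (map dag U)).
Qed.

Lemma pdag_invol x : pdag dag (pdag dag x) = x.
Proof.
apply: (lin_eq (fun x => pdag dag (pdag dag x)) id).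
- by apply: islin_comp; apply: (pdag_lin dag).
- by [].
- by move=> [a w]; rewrite (pdagU dag) (pdagU dag) /= dag_invol (mapK dag_invol).
Qed.

Lemma pdag_PA x : PA (pdag dag x) = pdag dag (PA x).
Proof.
apply: (lin_eq (fun x => PA (pdag dag x)) (fun x => pdag dag (PA x))).
- by apply: islin_comp; [apply: PA_lin | apply: (pdag_lin dag)].
- by apply: islin_comp; [apply: (pdag_lin dag) | apply: PA_lin].
- by move=> [a w]; rewrite (pdagU dag) PAU PAU (pdagU dag) /= dag1.
Qed.

Lemma part1 q : inv_comm_Rq_alg q (@peqv K A) (pmul q) (pone A) PA (pdag dag).
Proof.
split.
- exact: peqv_refl.
- exact: peqv_sym.
- exact: peqv_trans.
- exact: peqv_add.
- exact: peqv_scale.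
- exact: peqv_mul.
- exact: peqv_P.
- exact: (peqv_dag _ dag_lin).
- by move=> k x y z; apply: peqv_eq; apply: (pmul_lin1 z).
- by move=> x y z; apply: peqv_eq; apply: pmul_assoc.
- by move=> x y; apply: peqv_eq; apply: pmul_comm.
- by move=> x; apply: peqv_eq; apply: pmul_one.
- by move=> k x y; apply: peqv_eq; apply: PA_lin.
- rewrite /Rq_identity; case: q => [th||] x y; apply: peqv_eq.
  + exact: pRq_theta.
  + exact: pRq_right.
  + exact: pRq_left.
- by move=> k x y; apply: peqv_eq; apply: (pdag_lin dag).
- by move=> x; apply: peqv_eq; apply: pdag_invol.
- by move=> x y; apply: peqv_eq; apply: pdag_pmul.
- by move=> x; apply: peqv_eq; apply: pdag_PA.
Qed.

End Tensor9.

Opaque Defs.tmul Defs.consT Defs.wmul lin_ext bilin_ext Defs.pconsT Defs.pmul Defs.PA Defs.flat Defs.pdag.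

Section Free.
Context {K : fieldType} {A : comAlgType K} {q : wtype K}.
Local Notation FT := (@FT K A).
Local Notation FP := (@FP K A).
Local Notation wvec := (@wvec K A).
Local Notation pvec := (@pvec K A).
Local Notation consT := (@consT K A).
Local Notation pconsT := (@pconsT K A).
Local Notation Mq := (@Mq K A).
Local Notation wmul := (@wmul K A).
Local Notation pmul := (@pmul K A).
Local Notation PA := (@PA K A).

Variables (X : comAlgType K) (P dag' : X -> X).
Hypothesis HX : inv_comm_Rq_alg q (@eq X) *%R 1 P dag'.
Variable phi : A -> X.
Hypothesis phi_lin : forall (k : K) (a b : A), phi (k *: a + b) = k *: phi a + phi b.
Hypothesis phi_mul : forall a b : A, phi (a * b) = phi a * phi b.
Hypothesis phi1 : phi 1 = 1.

Lemma P_lin : islin P. Proof. exact: (P_linear HX). Qed.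

Lemma islin_mull (U : lmodType K) (L : U -> X) (c : X) : islin L -> islin (fun x => c * L x).
Proof. by move=> hL k x y; rewrite hL mulrDr scalerAr. Qed.
Lemma islin_mulr (U : lmodType K) (L : U -> X) (c : X) : islin L -> islin (fun x => L x * c).
Proof. by move=> hL k x y; rewrite hL mulrDl scalerAl. Qed.

Fixpoint h (w : seq A) : X :=
  if w is b :: w' then P (phi b * h w') else 1.

Definition H : FT -> X := lin_ext h.
Definition psi0 (p : A * seq A) : X := phi p.1 * h p.2.
Definition psi : FP -> X := lin_ext psi0.

Lemma H_lin : islin H. Proof. exact: lin_ext_lin. Qed.
Lemma psi_lin : islin psi. Proof. exact: lin_ext_lin. Qed.
Lemma HU w : H (wvec w) = h w. Proof. exact: lin_extU. Qed.
Lemma psiU a w : psi (pvec (a, w)) = phi a * h w. Proof. exact: lin_extU. Qed.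

Lemma H_consT c W : H (consT c W) = P (phi c * H W).
Proof.
apply: (lin_eq (fun W => H (consT c W)) (fun W => P (phi c * H W))).
- by apply: islin_comp; [apply: H_lin | apply: consT_lin].
- by apply: islin_comp; [apply: P_lin | apply: islin_mull; apply: H_lin].
- by move=> w; rewrite consTU !HU.
Qed.

Lemma psi_pconsT c W : psi (pconsT c W) = phi c * H W.
Proof.
apply: (lin_eq (fun W => psi (pconsT c W)) (fun W => phi c * H W)).
- by apply: islin_comp; [apply: psi_lin | apply: pconsT_lin].
- by apply: islin_mull; apply: H_lin.
- by move=> w; rewrite pconsTU psiU HU.
Qed.

Lemma h_cons b w : h (b :: w) = P (phi b * h w). Proof. by []. Qed.

Lemma q_cases' : (exists th, q = Wtheta th) \/ q = Wright \/ q = Wleft.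
Proof. by case: q => [th||]; [left; exists th | right; left | right; right]. Qed.

Lemma TD1 (E : q = Wleft) w : P w * P 1 = P (P w).
Proof.
move: (P_Rq HX w 1); rewrite E /= !mulr1 => ->.
by rewrite (islinD P_lin) addrK.
Qed.

Lemma TD2 (E : q = Wleft) w s : P w * P s * P 1 = P (P w * P s).
Proof.
rewrite -mulrA (TD1 E).
move: (P_Rq HX w (P s)); rewrite E /= => ->.
rewrite -mulrA (mulrC (P 1)) (TD1 E).
by rewrite (islinD P_lin) addrK.
Qed.

Lemma h_cases w : h w = 1 \/ exists z, h w = P z.
Proof. by case: w => [|b w]; [left | right; exists (phi b * h w)]. Qed.

Lemma PhP1 (E : q = Wleft) u v : P (h u * h v) = h u * h v * P 1.
Proof.
case: (h_cases u) => [->|[z ->]]; case: (h_cases v) => [->|[z' ->]].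
- by rewrite !mul1r.
- by rewrite !mul1r (TD1 E).
- by rewrite !mulr1 (TD1 E).
- by rewrite (TD2 E).
Qed.

Lemma H_wmul s t : H (wmul q s t) = h s * h t.
Proof.
elim: s t => [|a u IH] t; first by rewrite wmul_nil_l HU mul1r.
elim: t => [|b v IHt]; first by rewrite wmul_nil_r HU mulr1.
rewrite wmul_cons (islinD H_lin) (islinD H_lin) H_consT H_consT IH IHt.
rewrite [h (a :: u)]h_cons [h (b :: v)]h_cons.
set x := phi a * h u; set y := phi b * h v.
have e1 : phi a * (h u * P y) = x * P y by rewrite mulrA.
have e2 : phi b * (P x * h v) = P x * y by rewrite mulrCA.
rewrite e1 e2.
have [[th E]|[E|E]] := q_cases'.
- rewrite (MqT _ E) (islinZ H_lin) H_consT IH phi_mul -mulrACA.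
  move: (P_Rq HX x y); rewrite E /= => ->.
  by rewrite (islinD P_lin) swap12.
- rewrite (MqR E) (islinN H_lin) H_consT H_consT IH phi1 mul1r phi_mul -mulrACA.
  move: (P_Rq HX x y); rewrite E /= => ->.
  by rewrite (islinD P_lin) swap12.
- rewrite (MqL E) (islinN H_lin) H_consT H_consT IH phi1 mul1r (PhP1 E).
  have e3 : phi (a * b) * (h u * h v * P 1) = x * P 1 * y.
    by rewrite phi_mul /x /y; ring.
  rewrite e3.
  move: (P_Rq HX x y); rewrite E /= => ->.
  by rewrite (islinD P_lin) swap12.
Qed.

Lemma psi_mul x y : psi (pmul q x y) = psi x * psi y.
Proof.
move: x y; apply: (bilin_eqG (fun x y => psi (pmul q x y)) (fun x y => psi x * psi y)).
- by move=> y; apply: islin_comp; [apply: psi_lin | apply: pmul_lin1].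
- by move=> x; apply: islin_comp; [apply: psi_lin | apply: pmul_lin2].
- by move=> y; apply: islin_mulr; apply: psi_lin.
- by move=> x; apply: islin_mull; apply: psi_lin.
move=> [a U] [b V].
rewrite pmulU psi_pconsT H_wmul psiU psiU /= phi_mul.
by rewrite mulrACA.
Qed.

Lemma psi_one : psi (pone A) = 1.
Proof. by rewrite /pone psiU phi1 mulr1. Qed.

Lemma psi_P x : psi (PA x) = P (psi x).
Proof.
apply: (lin_eq (fun x => psi (PA x)) (fun x => P (psi x))).
- by apply: islin_comp; [apply: psi_lin | apply: PA_lin].
- by apply: islin_comp; [apply: P_lin | apply: psi_lin].
- by move=> [a w]; rewrite PAU psiU psiU phi1 mul1r.
Qed.

Lemma psi_iA a : psi (iA a) = phi a.
Proof. by rewrite /iA psiU mulr1. Qed.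

Lemma h_ml u v (k : K) a b :
  h (u ++ (k *: a + b) :: v) = k *: h (u ++ a :: v) + h (u ++ b :: v).
Proof.
elim: u => [|e u IH] /=.
- by rewrite phi_lin mulrDl -scalerAl (islinD P_lin) (islinZ P_lin).
- by rewrite IH mulrDr -scalerAr (islinD P_lin) (islinZ P_lin).
Qed.

Definition g (w : seq A) : X := if w is a :: w' then phi a * h w' else 0.
Definition Gf : FT -> X := lin_ext g.

Lemma g_ml u v (k : K) a b :
  g (u ++ (k *: a + b) :: v) = k *: g (u ++ a :: v) + g (u ++ b :: v).
Proof.
case: u => [|e u] /=.
- by rewrite phi_lin mulrDl -scalerAl.
- by rewrite h_ml mulrDr -scalerAr.
Qed.

Lemma psi_flat x : psi x = Gf (flat x).
Proof.
apply: (lin_eq psi (fun x => Gf (flat x))).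
- exact: psi_lin.
- by apply: islin_comp; [apply: lin_ext_lin | apply: flat_lin].
- by move=> [a w]; rewrite flatU psiU /Gf lin_extU.
Qed.

Lemma Gf_tnull z : tnull z -> Gf z = 0.
Proof.
have GL : islin Gf by apply: lin_ext_lin.
elim => [u v a b k|y z' _ hy _ hz|k y _ hy].
- by rewrite !(islinB GL) (islinZ GL) /Gf !lin_extU g_ml addrAC addrK subrr.
- by rewrite (islinD GL) hy hz addr0.
- by rewrite (islinZ GL) hy scaler0.
Qed.

Lemma psi_wd x y : peqv x y -> psi x = psi y.
Proof.
rewrite /peqv /teqv psi_flat psi_flat => /Gf_tnull.
rewrite /Gf (islinB (lin_ext_lin g)).
by move/eqP; rewrite subr_eq0 => /eqP.
Qed.

Variable dag : A -> A.
Hypothesis phi_dag : forall a : A, phi (dag a) = dag' (phi a).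

Lemma dag'1 : dag' 1 = 1.
Proof.
have h1 := dag_antimul HX (dag' 1) 1.
rewrite mulr1 (dag_invol HX) mulr1 in h1.
exact: esym h1.
Qed.

Lemma dag'_lin : islin dag'. Proof. exact: (dag_linear HX). Qed.

Lemma h_dag w : h (map dag w) = dag' (h w).
Proof.
elim: w => [|b w IH] /=; first by rewrite dag'1.
rewrite IH phi_dag -(dag_antimul HX) mulrC.
exact: (dag_P HX).
Qed.

Lemma psi_dag U : psi (pdag dag U) = dag' (psi U).
Proof.
apply: (lin_eq (fun U => psi (pdag dag U)) (fun U => dag' (psi U))).
- by apply: islin_comp; [apply: psi_lin | apply: pdag_lin].
- by apply: islin_comp; [apply: dag'_lin | apply: psi_lin].
- move=> [a w]; rewrite (pdagU dag) psiU psiU /= phi_dag h_dag.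
  by rewrite (dag_antimul HX) mulrC.
Qed.

End Free.

Section Uniq.
Context {K : fieldType} {A : comAlgType K} {q : wtype K}.
Variables (X : comAlgType K) (P : X -> X) (phi : A -> X).

Lemma uniq_morph (psi1 psi2 : FP A -> X) :
  Rq_morph (@peqv K A) (pmul q) (pone A) (@PA K A) P psi1 ->
  (forall a : A, psi1 (iA a) = phi a) ->
  Rq_morph (@peqv K A) (pmul q) (pone A) (@PA K A) P psi2 ->
  (forall a : A, psi2 (iA a) = phi a) ->
  forall U : FP A, psi1 U = psi2 U.
Proof.
move=> M1 h1 M2 h2.
have key : forall (f : FP A -> X), Rq_morph (@peqv K A) (pmul q) (pone A) (@PA K A) P f ->
  forall a b w, f (pvec (a, b :: w)) = f (iA a) * P (f (pvec (b, w))).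
  move=> f Mf a b w.
  rewrite -(morph_P Mf) -(morph_mul Mf) /iA PAU pmulU /= mulr1 wmul_nil_l pconsTU.
  by [].
apply: (lin_eq psi1 psi2); [exact: (morph_linear M1) | exact: (morph_linear M2) |].
move=> [a w]; elim: w a => [|b w IH] a.
  by have := h1 a; rewrite -(h2 a).
by rewrite (key _ M1) (key _ M2) h1 h2 IH.
Qed.
End Uniq.

Theorem theorem4p9 (K : fieldType) (charK0 : [pchar K] =i pred0)
  (A : comAlgType K) (dag : A -> A)
  (dag_lin : forall (k : K) (a b : A), dag (k *: a + b) = k *: dag a + dag b)
  (dag_invol : forall a : A, dag (dag a) = a)
  (dag_antimul : forall a b : A, dag (a * b) = dag b * dag a)
  (q : wtype K) :
  inv_comm_Rq_alg q (@peqv K A) (pmul q) (pone A) (@PA K A) (pdag dag)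
  /\
  forall (X : comAlgType K) (P dag' : X -> X),
    inv_comm_Rq_alg q (@eq X) *%R 1 P dag' ->
    forall phi : A -> X,
      (forall (k : K) (a b : A), phi (k *: a + b) = k *: phi a + phi b) ->
      (forall a b : A, phi (a * b) = phi a * phi b) ->
      phi 1 = 1 ->
      (forall a : A, phi (dag a) = dag' (phi a)) ->
      (exists psi : FP A -> X,
          Rq_morph (@peqv K A) (pmul q) (pone A) (@PA K A) P psi
          /\ (forall a : A, psi (iA a) = phi a)
          /\ (forall U : FP A, psi (pdag dag U) = dag' (psi U)))
      /\
      (forall psi1 psi2 : FP A -> X,
          Rq_morph (@peqv K A) (pmul q) (pone A) (@PA K A) P psi1 ->
          (forall a : A, psi1 (iA a) = phi a) ->
          Rq_morph (@peqv K A) (pmul q) (pone A) (@PA K A) P psi2 ->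
          (forall a : A, psi2 (iA a) = phi a) ->
          forall U : FP A, psi1 U = psi2 U).
Proof.
split; first exact: (part1 _ dag_lin dag_invol dag_antimul q).
move=> X P dag' HX phi phi_lin phi_mul phi1 phi_dag; split.
- exists (psi X P phi); split; [split|split].
  + by move=> x y; apply: (psi_wd (q:=q)) => //; exact: HX.
  + by move=> k x y; apply: psi_lin.
  + by move=> x y; apply: (psi_mul (q:=q)) => //; exact: HX.
  + by apply: psi_one.
  + by move=> x; apply: (psi_P (q:=q)) => //; exact: HX.
  + by move=> a; apply: psi_iA.
  + by move=> U; apply: (psi_dag (q:=q)) => //; exact: HX.
- by move=> psi1 psi2; apply: uniq_morph.
Qed.
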